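(* Let $G$ be a finite simple graph, $\mathbb{K}$ a field, $d$ a nonnegative integer, and let $z$ be a $d$-cycle of $\mathrm{cl}(G)$ (over $\mathbb{K}$) which is $d$-minimal for $G$. Let $v\in z_0$. Then the $(d-1)$-cycle $\mathrm{lk}_z(v)$ is homologically nontrivial in $\mathrm{cl}(G[N_z(v)])$.
   Context: $\mathrm{cl}(G)$ is the clique complex of $G$. A $d$-cycle $z=\sum_\sigma a_\sigma\sigma$ of $\mathrm{cl}(G)$ is a nontrivial homology $d$-cycle if it is not a boundary; its vertex support $z_0$ is the set of vertices lying in some $d$-face $\sigma$ with $a_\sigma\neq0$. A nontrivial homology $d$-cycle $z$ is $d$-minimal for $G$ if no proper subset of $z_0$ is the vertex support of a nontrivial homology $d$-cycle of $\mathrm{cl}(G)$. For $v\in z_0$, $N_z(v)=N_G(v)\cap z_0$ (with $N_G(v)$ the set of neighbors of $v$), $G[A]$ is the induced subgraph on $A$, and $\mathrm{lk}_z(v)$ is the $(d-1)$-chain obtained from $z$ by the link map, i.e. the chain $\sum_{\sigma\ni v}\pm a_\sigma(\sigma\setminus\{v\})$ (with the sign making $\partial$ of the star part of $z$ compatible), which is a $(d-1)$-cycle supported in $\mathrm{cl}(G[N_z(v)])$. *)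

(* Defs.v *)
(* Simplicial (augmented, i.e. reduced) homology of clique
   complexes over a field K. Faces are vertex sets; the empty set is the unique
   (-1)-face. A d-face is a clique of size d+1. Chains are finitely supported
   functions {set T} -> K; orientation is induced by the linear order
   enum_rank on the vertex type T. *)
From HB Require Import structures.
From mathcomp Require Import all_boot all_order all_algebra.
Set Implicit Arguments. Unset Strict Implicit. Unset Printing Implicit Defensive.
Import Order.TTheory GRing.Theory Num.Theory.
Local Open Scope ring_scope.

Section CliqueHomology.
Variables (K : fieldType) (T : finType).

Definition chain := {ffun {set T} -> K}.

(* s is a face of cl(G[A]): a clique of G contained in A *)
Definition is_clique (e : rel T) (A s : {set T}) : bool :=
  (s \subset A) && [forall u in s, forall w in s, (u != w) ==> e u w].

Definition fsign (v : T) (s : {set T}) : K :=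
  (-1) ^+ #|[set u in s | (enum_rank u < enum_rank v)%N]|.

(* c is a chain of cl(G[A]) of faces of size k (dimension k-1) *)
Definition is_chain (e : rel T) (A : {set T}) (k : nat) (c : chain) : Prop :=
  forall s, c s != 0 -> is_clique e A s /\ #|s| = k.

(* boundary: d(s) = sum_{v in s} (-1)^{pos(v,s)} (s \ v) *)
Definition bnd (c : chain) : chain :=
  [ffun t : {set T} => \sum_(v : T | v \notin t) fsign v (v |: t) * c (v |: t)].

Definition is_boundary (e : rel T) (A : {set T}) (k : nat) (c : chain) : Prop :=
  exists b, is_chain e A k.+1 b /\ bnd b = c.

Definition nontriv_cycle (e : rel T) (A : {set T}) (k : nat) (c : chain) : Prop :=
  [/\ is_chain e A k c, bnd c = 0 & ~ is_boundary e A k c].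

Definition vsupp (z : chain) : {set T} :=
  [set v | [exists s : {set T}, (z s != 0) && (v \in s)]].

Definition d_minimal (e : rel T) (d : nat) (z : chain) : Prop :=
  nontriv_cycle e setT d.+1 z /\
  forall z' : chain, nontriv_cycle e setT d.+1 z' -> ~ (vsupp z' \proper vsupp z).

Definition Nz (e : rel T) (z : chain) (v : T) : {set T} :=
  [set u | e v u & u \in vsupp z].

Definition lk (z : chain) (v : T) : chain :=
  [ffun t : {set T} => if v \in t then 0 else fsign v (v |: t) * z (v |: t)].

End CliqueHomology.

(* Main.v *)
Require Import Defs.
From HB Require Import structures.
From mathcomp Require Import all_boot all_order all_algebra.
From mathcomp Require Import ring.
Set Implicit Arguments. Unset Strict Implicit. Unset Printing Implicit Defensive.
Import Order.TTheory GRing.Theory Num.Theory.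
Local Open Scope ring_scope.

Lemma zero_ffunE (K : fieldType) (T : finType) (t : {set T}) :
  (0 : chain K T) t = 0.
Proof. by rewrite ffunE. Qed.

Lemma fsignU (K : fieldType) (T : finType) (x w : T) (R : {set T}) :
  x \notin R -> fsign K w (x |: R) =
    (if (enum_rank x < enum_rank w)%N then -1 else 1) * fsign K w R.
Proof.
move=> xR; rewrite /fsign; case: ifP => h.
  have -> : [set u in x |: R | (enum_rank u < enum_rank w)%N]
      = x |: [set u in R | (enum_rank u < enum_rank w)%N].
    by apply/setP => y; rewrite !inE; case: eqP => // ->; rewrite h.
  by rewrite cardsU1 inE (negbTE xR) /= add1n exprS.
have -> : [set u in x |: R | (enum_rank u < enum_rank w)%N]
      = [set u in R | (enum_rank u < enum_rank w)%N].
  by apply/setP => y; rewrite !inE; case: eqP => // ->; rewrite h (negbTE xR).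
by rewrite mul1r.
Qed.

Lemma rank_neq (T : finType) (u v : T) : u != v -> enum_rank u != enum_rank v.
Proof. by apply: contra => /eqP /enum_rank_inj ->. Qed.

Lemma key (K : fieldType) (T : finType) (u v : T) (S : {set T}) :
  u != v -> u \notin S -> v \notin S ->
  fsign K u (u |: S) * fsign K v (v |: (u |: S)) =
  - (fsign K v (v |: S) * fsign K u (u |: (v |: S))).
Proof.
move=> uv uS vS.
rewrite (setUCA [set v] [set u] S) (@fsignU _ _ u v); last by rewrite !inE negb_or ?uS ?vS andbT ?uv // eq_sym.
rewrite (setUCA [set u] [set v] S) (@fsignU _ _ v u); last by rewrite !inE negb_or ?uS ?vS andbT ?uv // eq_sym.
have := rank_neq uv; rewrite neq_ltn => /orP[h|h].
  by rewrite h ltnNge ltnW //=; ring.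
by rewrite h ltnNge ltnW //=; ring.
Qed.

Lemma key2 (K : fieldType) (T : finType) (u v : T) (S : {set T}) :
  u != v -> u \notin S -> v \notin S ->
  fsign K u (u |: (v |: S)) * fsign K v (v |: (u |: S)) =
  - (fsign K u (u |: S) * fsign K v (v |: S)).
Proof.
move=> uv uS vS.
rewrite (setUCA [set v] [set u] S) (@fsignU _ _ u v); last by rewrite !inE negb_or ?uS ?vS andbT ?uv // eq_sym.
rewrite (setUCA [set u] [set v] S) (@fsignU _ _ v u); last by rewrite !inE negb_or ?uS ?vS andbT ?uv // eq_sym.
have := rank_neq uv; rewrite neq_ltn => /orP[h|h].
  by rewrite h ltnNge ltnW //=; ring.
by rewrite h ltnNge ltnW //=; ring.
Qed.

Lemma fsign_sq (K : fieldType) (T : finType) (v : T) s :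
  fsign K v s * fsign K v s = 1.
Proof. by rewrite /fsign -exprMn mulrNN mulr1 expr1n. Qed.

Lemma pair_cancel (K : fieldType) (T : finType) (P : T -> T -> bool)
  (F : T -> T -> K) (r : T -> nat) : injective r ->
  (forall u w, P u w = P w u) -> (forall u, ~~ P u u) ->
  (forall u w, P u w -> F w u = - F u w) ->
  \sum_u \sum_(w | P u w) F u w = 0.
Proof.
move=> rinj Ps Pi FN.
rewrite (eq_bigr (fun u => \sum_(w | P u w && (r u < r w)%N) F u w
   + \sum_(w | P u w && ~~ (r u < r w)%N) F u w)); last first.
  by move=> u _; rewrite (bigID (fun w => (r u < r w)%N)).
rewrite big_split /=.
rewrite [X in _ + X](exchange_big_dep predT) //=.
rewrite [X in _ + X](eq_bigr (fun a => \sum_(b | P a b && (r a < r b)%N) - F a b)).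
  by under [X in _ + X]eq_bigr do rewrite sumrN; rewrite sumrN addrN.
move=> a _; apply: eq_big => b.
  rewrite Ps; case Pab: (P a b) => //=.
  have ab : a != b by apply: contraTneq Pab => ->; rewrite (negbTE (Pi b)).
  have rab : r a != r b by apply: contra ab => /eqP /rinj ->.
  by rewrite -leqNgt leq_eqVlt (negbTE rab).
by move=> /andP[Pab _]; rewrite -FN // Ps.
Qed.

Lemma bnd_nz (K : fieldType) (T : finType) (c : chain K T) s :
  bnd c s != 0 -> exists2 u, u \notin s & c (u |: s) != 0.
Proof.
move=> H.
have : [exists u, (u \notin s) && (c (u |: s) != 0)].
  apply: contraT => /existsPn H'.
  move: H; rewrite ffunE big1 ?eqxx // => u us.
  by move: (H' u); rewrite us /= negbK => /eqP ->; rewrite mulr0.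
by case/existsP => u /andP[us cu]; exists u.
Qed.

Lemma clique_sub (T : finType) (e : rel T) (A s s' : {set T}) :
  is_clique e A s -> s' \subset s -> is_clique e A s'.
Proof.
move=> /andP[sA /forall_inP H] s's; apply/andP; split.
  exact: subset_trans s's sA.
apply/forall_inP => u us; apply/forall_inP => w ws.
exact: (forall_inP (H u (subsetP s's u us)) w (subsetP s's w ws)).
Qed.

Lemma chain_add (K : fieldType) (T : finType) (e : rel T) A k (c1 c2 : chain K T) :
  is_chain e A k c1 -> is_chain e A k c2 ->
  is_chain e A k [ffun s => c1 s + c2 s].
Proof.
move=> h1 h2 s; rewrite ffunE => H.
case: (eqVneq (c1 s) 0) => z1; last exact: h1.
by apply: h2; rewrite z1 add0r in H.
Qed.

Lemma chain_sub (K : fieldType) (T : finType) (e : rel T) A k (c1 c2 : chain K T) :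
  is_chain e A k c1 -> is_chain e A k c2 ->
  is_chain e A k [ffun s => c1 s - c2 s].
Proof.
move=> h1 h2 s; rewrite ffunE => H.
case: (eqVneq (c1 s) 0) => z1; last exact: h1.
by apply: h2; rewrite z1 sub0r oppr_eq0 in H.
Qed.

Lemma bnd_add (K : fieldType) (T : finType) (c1 c2 : chain K T) t :
  bnd [ffun s => c1 s + c2 s] t = bnd c1 t + bnd c2 t.
Proof.
rewrite !ffunE -big_split /=; apply: eq_bigr => u _; by rewrite ffunE mulrDr.
Qed.

Lemma bnd_sub (K : fieldType) (T : finType) (c1 c2 : chain K T) t :
  bnd [ffun s => c1 s - c2 s] t = bnd c1 t - bnd c2 t.
Proof.
rewrite !ffunE -sumrB /=; apply: eq_bigr => u _; by rewrite ffunE mulrBr.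
Qed.

Lemma bnd_chain (K : fieldType) (T : finType) (e : rel T) A k (c : chain K T) :
  is_chain e A k.+1 c -> is_chain e A k (bnd c).
Proof.
move=> hc s /bnd_nz [u us cu]; have [cl sz] := hc _ cu; split.
  exact: clique_sub cl (subsetUr _ _).
by move: sz; rewrite cardsU1 us add1n => -[].
Qed.

Lemma bnd_bnd (K : fieldType) (T : finType) (c : chain K T) : bnd (bnd c) = 0.
Proof.
apply/ffunP => t; rewrite zero_ffunE ffunE.
under eq_bigr => u _ do rewrite ffunE mulr_sumr.
rewrite big_mkcond /=.
rewrite (eq_bigr (fun u => \sum_(w | [&& u \notin t, w \notin t & u != w])
   fsign K u (u |: t) * (fsign K w (w |: (u |: t)) * c (w |: (u |: t))))).
  apply: (pair_cancel (r := fun x => nat_of_ord (enum_rank x))).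
  - by move=> x y /val_inj /enum_rank_inj.
  - by move=> u w; rewrite andbCA eq_sym.
  - by move=> u; rewrite eqxx !andbF.
  move=> u w /and3P[ut wt uw].
  rewrite !mulrA (key _ uw ut wt) mulNr opprK.
  by rewrite setUCA.
move=> u _; case: ifP => ut /=.
  by apply: eq_bigl => w; rewrite !inE negb_or eq_sym andbC.
by rewrite big_pred0.
Qed.

Definition cone0 (K : fieldType) (T : finType) (v : T) (b : chain K T) : chain K T :=
  [ffun s : {set T} => if v \in s then fsign K v s * b (s :\ v) else 0].

Lemma cone_chain (K : fieldType) (T : finType) (e : rel T) (e_sym : symmetric e)
  (v : T) (A : {set T}) (k : nat) (b : chain K T) :
  (forall u, u \in A -> e v u) -> v \notin A ->
  is_chain e A k b -> is_chain e setT k.+1 (cone0 v b).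
Proof.
move=> NA vA hb s; rewrite ffunE; case: ifP => vs; last by rewrite eqxx.
move=> H; have bn : b (s :\ v) != 0 by apply: contraNneq H => ->; rewrite mulr0.
have [cl sz] := hb _ bn; split; last by rewrite (cardsD1 v s) vs sz.
move: cl => /andP[sA /forall_inP cl].
apply/andP; split; first exact: subsetT.
apply/forall_inP => u us; apply/forall_inP => w ws; apply/implyP => uw.
case: (eqVneq u v) => [Eu|uv].
  rewrite Eu; apply: NA; apply: (subsetP sA); rewrite !inE ws andbT.
  by rewrite -Eu eq_sym.
case: (eqVneq w v) => [Ew|wv].
  by rewrite Ew e_sym; apply: NA; apply: (subsetP sA); rewrite !inE us uv.
have := forall_inP (cl u _) w; rewrite !inE uv wv us ws => /(_ isT isT).
by rewrite uw.
Qed.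

Theorem lemma3p2 (K : fieldType) (T : finType) (e : rel T)
  (e_sym : symmetric e) (e_irr : irreflexive e)
  (d : nat) (z : chain K T) (zmin : d_minimal e d z)
  (v : T) (vz : v \in vsupp z) :
  nontriv_cycle e (Nz e z v) d (lk z v).
Proof.
move: zmin => [[zch zcyc znb] zmin].
set A := Nz e z v.
have vA : v \notin A by rewrite /A inE e_irr.
have NA : forall u, u \in A -> e v u by move=> u; rewrite inE => /andP[].
have AV : A \subset vsupp z by apply/subsetP => u; rewrite inE => /andP[].
split.
- move=> s; rewrite ffunE; case: ifP => vs; first by rewrite eqxx.
  move=> H; have zn : z (v |: s) != 0 by apply: contraNneq H => ->; rewrite mulr0.
  have [cl sz] := zch _ zn.
  split; last by move: sz; rewrite cardsU1 vs /= add1n => -[].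
  move: cl => /andP[_ /forall_inP cl].
  apply/andP; split.
    apply/subsetP => u us; rewrite inE; apply/andP; split.
      have := forall_inP (cl v (setU11 v s)) u (setU1r v us).
      move/implyP; apply; apply/eqP => vu; by rewrite vu us in vs.
    by rewrite inE; apply/existsP; exists (v |: s); rewrite zn setU1r.
  apply/forall_inP => u us; apply/forall_inP => w ws.
  exact: (forall_inP (cl u (setU1r v us)) w (setU1r v ws)).
- apply/ffunP => t; rewrite zero_ffunE ffunE.
  case: (boolP (v \in t)) => vt.
    by apply: big1 => u ut; rewrite ffunE setU1r //= mulr0.
  transitivity (- fsign K v (v |: t) * bnd z (v |: t)); last first.
    by rewrite zcyc zero_ffunE mulr0.
  rewrite ffunE mulr_sumr (bigD1 v) //= ffunE setU11 /= mulr0 add0r.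
  apply: eq_big => [u|u /andP[ut uv]]; first by rewrite !inE negb_or andbC.
  rewrite ffunE in_setU1 eq_sym (negbTE uv) (negbTE vt) /=.
  by rewrite mulrA (key _ uv ut vt) mulNr mulNr mulrA setUCA.
- move=> [b [bch bb]].
  set c := cone0 v b.
  have cch : is_chain e setT d.+2 c by apply: (cone_chain e_sym NA vA bch).
  set z' : chain K T := [ffun s => z s + bnd c s].
  have z'v : forall s : {set T}, v \in s -> z' s = 0.
    move=> s vs; rewrite ffunE.
    set t := s :\ v.
    have st : s = v |: t by rewrite setD1K.
    have vt : v \notin t by rewrite !inE eqxx.
    have lkt : lk z v t = bnd b t by rewrite bb.
    move: lkt; rewrite !ffunE (negbTE vt) -st => H.
    have zs : z s = fsign K v s * \sum_(u | u \notin t) fsign K u (u |: t) * b (u |: t).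
      by rewrite -H mulrA fsign_sq mul1r.
    rewrite zs (bigD1 v) //= -st.
    have -> : b s = 0.
      apply/eqP; apply: contraNT vA => bs; have [cl _] := bch _ bs.
      by move: cl => /andP[sA _]; apply: (subsetP sA).
    rewrite mulr0 add0r mulr_sumr.
    rewrite [X in X + _](eq_bigl (fun u => u \notin s)); last first.
      by move=> u; rewrite st !inE negb_or andbC.
    rewrite -big_split /=.
    apply: big1 => u us.
    have uv : u != v by apply: contraNneq us => ->.
    have ut : u \notin t by rewrite !inE negb_and us orbT.
    rewrite ffunE setU1r //.
    have -> : (u |: s) :\ v = u |: t.
      apply/setP => x; rewrite st !inE.
      case: (eqVneq x v) => [->|xv] /=; first by rewrite eq_sym (negbTE uv).
      by [].
    have := key2 K uv ut vt; rewrite (setUCA [set v] [set u] t) => Hk.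
    by rewrite st !mulrA Hk; ring.
  have z'ch : is_chain e setT d.+1 z' by apply: chain_add zch (bnd_chain cch).
  have z'cyc : bnd z' = 0.
    by apply/ffunP => t; rewrite bnd_add zcyc bnd_bnd !zero_ffunE addr0.
  have z'nb : ~ is_boundary e setT d.+1 z'.
    move=> [c' [c'ch c'b]]; apply: znb.
    exists [ffun s => c' s - c s]; split; first exact: chain_sub c'ch cch.
    by apply/ffunP => t; rewrite bnd_sub c'b ffunE addrK.
  apply: (zmin z' (And3 z'ch z'cyc z'nb)).
  rewrite properE; apply/andP; split.
    apply/subsetP => x; rewrite inE => /existsP[s /andP[zs xs]].
    case: (eqVneq (z s) 0) => zs0; last first.
      by rewrite inE; apply/existsP; exists s; rewrite zs0 xs.
    move: zs; rewrite ffunE zs0 add0r => /bnd_nz[u us].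
    rewrite ffunE; case: ifP => vus; last by rewrite eqxx.
    move=> cu; have bn : b ((u |: s) :\ v) != 0.
      by apply: contraNneq cu => ->; rewrite mulr0.
    have [/andP[sA _] _] := bch _ bn.
    case: (eqVneq x v) => [->//|xv].
    apply: (subsetP AV); apply: (subsetP sA).
    by rewrite !inE xv xs orbT.
  apply/subsetPn; exists v => //.
  rewrite inE negb_exists; apply/forallP => s; rewrite negb_and negbK.
  by case vs: (v \in s); [rewrite z'v // eqxx | rewrite orbT].
Qed.
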